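(* Let $p\ge7$ be a prime. Then the cycle $C_{2p}$ admits an optimal extended irregular dominating set.
   Context: $C_m$ is the cycle on $m$ vertices. In a finite simple graph $\Gamma=(V,E)$ with distance $d$, a vertex $v$ carrying a non-negative integer label $\ell$ dominates (covers) exactly the vertices $u$ with $d(u,v)=\ell$; a vertex labeled $0$ dominates only itself. For $k\ge0$, a $k$-extended irregular dominating set is a set $S\subseteq V$ of $k$ vertices with a labeling $\lambda:S\to\mathbb{Z}_{\ge0}$ with distinct labels, such that every vertex of $V$ is dominated by some vertex of $S$; it is assumed that some vertex of $S$ has label $0$. $\gamma_e(\Gamma)$ is the minimum cardinality of such a set; a $k$-extended irregular dominating set is optimal if $k=\gamma_e(\Gamma)$. *)

(* Defs.v *)
From mathcomp Require Import all_boot.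
Set Implicit Arguments. Unset Strict Implicit. Unset Printing Implicit Defensive.

(* A finite simple graph is given by a symmetric irreflexive relation [e] on a finType. *)

Fixpoint ball (T : finType) (e : rel T) (k : nat) (x : T) : {set T} :=
  match k with
  | 0 => [set x]
  | k'.+1 => ball e k' x :|: [set z | [exists y in ball e k' x, e y z]]
  end.

Definition at_dist (T : finType) (e : rel T) (x y : T) (l : nat) : bool :=
  (y \in ball e l x) && (if l is l'.+1 then y \notin ball e l' x else true).

Definition cycle_rel (m : nat) : rel 'I_m :=
  fun i j => ((i.+1 %% m) == j) || ((j.+1 %% m) == i).

Definition ext_irr_dom (T : finType) (e : rel T) (S : {set T}) (lam : T -> nat) : Prop :=
  {in S &, injective lam} /\
  (exists2 v, v \in S & lam v = 0) /\
  (forall u : T, exists2 v, v \in S & at_dist e v u (lam v)).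

Definition optimal_ext_irr_dom (T : finType) (e : rel T) (S : {set T}) (lam : T -> nat) : Prop :=
  ext_irr_dom e S lam /\
  (forall (S' : {set T}) (lam' : T -> nat), ext_irr_dom e S' lam' -> #|S| <= #|S'|).

(* Main.v *)
Require Import Defs.
From mathcomp Require Import all_boot all_algebra all_field zify ring.
Set Implicit Arguments. Unset Strict Implicit. Unset Printing Implicit Defensive.
Import GRing.Theory.
Section Ball.
Variable n : nat.
Hypothesis n_gt0 : 0 < n.

Definition nearL (x y j : nat) := [|| y == x + j, y + n == x + j, x == y + j | x + n == y + j].

Lemma edgeE (a b : 'I_n) : cycle_rel a b =
  [|| a.+1 == b, a.+1 == b + n, b.+1 == a | b.+1 == a + n].
Proof.
have H : forall c d : 'I_n, (c.+1 %% n == d) = (c.+1 == d) || (c.+1 == d + n).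
  move=> c d; have := ltn_ord c; rewrite leq_eqVlt => /orP [/eqP E|L].
    by rewrite E modnn; case: d => [[|d]] /=; lia.
  by rewrite modn_small //; case: d c L => d Hd [c Hc] /=; lia.
by rewrite /cycle_rel !H !orbA.
Qed.

Lemma ball_char (k : nat) (x y : 'I_n) : k < n ->
  (y \in ball (@cycle_rel n) k x) <-> exists j, j <= k /\ nearL x y j.
Proof.
elim: k y => [|k IH] y /= kn.
  rewrite in_set1; split => [/eqP ->|[j [j0 H]]].
    by exists 0; rewrite /nearL addn0 eqxx.
  apply/eqP/val_inj; move: H; rewrite /nearL.
  case: x y => [x Hx] [y Hy] /=; lia.
have IHk := fun y => IH y (ltnW kn).
rewrite in_setU in_set; split.
  case/orP => [/IHk [j [Hj Hn]]|/existsP [z /andP [Hz Hzy]]].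
    by exists j; split => //; lia.
  move: Hz => /IHk [j [Hj Hn]]; move: Hzy; rewrite edgeE => Hzy.
  move: Hn Hzy; rewrite /nearL.
  clear IH IHk; case: x y z => [x Hx] [y Hy] [z Hz] /= Hn Hzy.
  case: (boolP (nearL x y j.+1)) => H1; first by exists j.+1.
  case: (boolP (nearL x y j.-1)) => H2; first by exists j.-1; split => //; lia.
  exfalso; move: H1 H2; rewrite /nearL; lia.
case=> j [Hj Hn].
have [jk|jk] := leqP j k.
  by apply/orP; left; apply/IHk; exists j.
have Ej : j = k.+1 by lia. subst j.
apply/orP; right.
have key : forall v (hv : v < n), nearL x v k ->
    [|| v.+1 == y, v.+1 == y + n, y.+1 == v | y.+1 == v + n] ->
    [exists y0, (y0 \in ball (cycle_rel (m:=n)) k x) && cycle_rel y0 y].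
  move=> v hv H1 H2; apply/existsP; exists (Ordinal hv); apply/andP; split.
    by apply/IHk; exists k.
  by rewrite edgeE.
clear IH IHk; case: x y kn Hn key => [x Hx] [y Hy] /= kn Hn key.
move: Hn; rewrite /nearL => /orP [H|/orP [H|/orP [H|H]]].
- by apply: (key (x + k)); rewrite /nearL /=; lia.
- case: (ltnP (x + k) n) => L.
    by apply: (key (x + k)); rewrite /nearL /=; lia.
  by apply: (key (x + k - n)); rewrite /nearL /=; lia.
- by apply: (key y.+1); rewrite /nearL /=; lia.
- case: (ltnP y.+1 n) => L.
    by apply: (key y.+1); rewrite /nearL /=; lia.
  by apply: (key 0); rewrite /nearL /=; lia.
Qed.
End Ball.

Section Dist.
Variable n : nat.
Hypothesis n_gt0 : 0 < n.

Lemma cong_near (x y l : nat) : x < n -> y < n -> l < n ->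
  (y == x + l %[mod n]) || (x == y + l %[mod n]) -> nearL n x y l.
Proof.
move=> xn yn ln.
have M : forall a b, a < n -> b < n -> a == b + l %[mod n] ->
    (a == b + l) || (a + n == b + l).
  move=> a b an bn; rewrite (modn_small an).
  case: (ltnP (b + l) n) => L; first by rewrite (modn_small L) => ->.
  have -> : b + l = (b + l - n) + n by rewrite subnK.
  rewrite modnDr modn_small; last by lia.
  move/eqP => E; apply/orP; right; apply/eqP; lia.
case/orP => [/(M _ _ yn xn)|/(M _ _ xn yn)]; rewrite /nearL; lia.
Qed.

Lemma at_dist_near (x y : 'I_n) (l : nat) : 0 < l -> l.*2 <= n ->
  nearL n x y l -> at_dist (@cycle_rel n) x y l.
Proof.
move=> l0 l2 H; have ln : l < n by lia.
rewrite /at_dist; apply/andP; split.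
  by apply/ball_char => //; exists l.
case: l l0 l2 ln H => [//|l] _ l2 ln H.
apply/negP => /ball_char [] //; first lia.
move=> j [jl Hj]; move: H Hj; rewrite /nearL.
case: x y => [x xn] [y yn] /=; lia.
Qed.
End Dist.

Section Constr.
Variable p : nat.
Hypothesis hp : prime p.
Hypothesis h7 : (7 <= p)%N.
Local Notation F := ('F_p).
Local Notation m := (p.-1./2).
Local Open Scope ring_scope.

Lemma p_odd : odd p.
Proof. by case: (even_prime hp) => [E|//]; move: h7; rewrite E. Qed.

Lemma p_gt0 : (0 < p)%N. Proof. exact: prime_gt0. Qed.

Lemma m2 : (m * 2 = p.-1)%N.
Proof.
have := odd_double_half p.-1; have := p_odd; have := p_gt0.
case: p => [|q] //= _ /negbTE -> /=; rewrite add0n muln2 => //.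
Qed.

Lemma m_gt0 : (0 < m)%N.
Proof. have := m2; lia. Qed.

Lemma valF (x : F) : (val x < p)%N /\ ((val x)%:R = x).
Proof.
split; last exact: natr_Zp.
have E := val_Fp_nat hp (val x); rewrite natr_Zp in E.
change (nat_of_ord x < p)%N; rewrite E; exact: ltn_pmod p_gt0.
Qed.

Lemma natF_eq a b : ((a%:R : F) == b%:R) = (a == b %[mod p])%N.
Proof. by rewrite -val_eqE /= !val_Fp_nat. Qed.

Lemma natF_inj a b : (a < p)%N -> (b < p)%N -> (a%:R : F) = b%:R -> a = b.
Proof. by move=> ap bp /eqP; rewrite natF_eq !modn_small // => /eqP. Qed.

Lemma natF_neq0 a : (0 < a < p)%N -> (a%:R : F) != 0.
Proof.
move=> /andP [a0 ap]; apply/eqP => E.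
have : (a%:R : F) = 0%:R by rewrite E.
by move/natF_inj => /(_ ap p_gt0) E'; rewrite E' in a0.
Qed.

Lemma two_neq0 : (2%:R : F) != 0.
Proof. by apply: natF_neq0; rewrite /=; lia. Qed.

Lemma one_neq_m1 : (1 : F) != -1.
Proof. by rewrite -subr_eq0 opprK -mulr2n two_neq0. Qed.

Lemma fermat (x : F) : x != 0 -> x ^+ p.-1 = 1.
Proof.
move=> xnz; apply: (mulIf xnz); rewrite mul1r -exprSr prednK ?p_gt0 //.
by have := expf_card x; rewrite card_Fp.
Qed.

Lemma chi_pm (x : F) : x != 0 -> x ^+ m = 1 \/ x ^+ m = -1.
Proof.
move=> xnz; have : (x ^+ m) ^+ 2 == 1 by rewrite -exprM m2 fermat.
by rewrite sqrf_eq1 => /orP [/eqP|/eqP]; auto.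
Qed.

Lemma exists_w : exists w : F, w ^+ m = -1 /\ w != -1.
Proof.
case: (boolP [exists w : F, (w ^+ m == -1) && (w != -1)]).
  by case/existsP => w /andP [/eqP ? ?]; exists w.
rewrite negb_exists => /forallP H; exfalso.
pose A := [set: F] :\ 0 :\ -1.
have cA : (#|A| + 2 = p)%N.
  have cF := card_Fp hp.
  have := cardsD1 0 [set: F]; have := cardsD1 (-1) ([set: F] :\ 0).
  rewrite cardsT cF !inE oppr_eq0 oner_eq0 /= -/A => E1 E2; by rewrite [in RHS]E2 E1 addnA addnC.
have : (size (enum A) <= m)%N.
  apply: max_unity_roots; first exact: m_gt0; last exact: enum_uniq.
  apply/allP => x; rewrite mem_enum !inE => /andP [xm1 /andP [x0 _]].
  rewrite unity_rootE; have := H x; rewrite xm1 andbT.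
  by case: (chi_pm x0) => ->; rewrite ?eqxx.
rewrite -cardE; have := m2; move: cA h7; move: (#|A|) (p.-1./2) => a b; rewrite -subn1 ; lia.
Qed.


Variable w : F.
Hypothesis hw : w ^+ m = -1.
Hypothesis hw1 : w != -1.

Lemma w_neq0 : w != 0.
Proof.
apply/eqP => E; move: hw; rewrite E expr0n.
have -> : (m == 0)%N = false by have := m_gt0; lia.
by move/eqP; rewrite eq_sym oppr_eq0 oner_eq0.
Qed.

Lemma w_neq1 : w != 1.
Proof. by apply/eqP => E; move: hw; rewrite E expr1n; apply/eqP; exact: one_neq_m1. Qed.

Lemma wm1 : w - 1 != 0.
Proof. by rewrite subr_eq0 w_neq1. Qed.

Definition k : F := (w + 1) / (w - 1).

Lemma k_m1 : k - 1 != 0.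
Proof.
have -> : k - 1 = 2%:R / (w - 1).
  by rewrite /k; field; rewrite wm1.
by rewrite mulf_neq0 ?invr_eq0 ?two_neq0 ?wm1.
Qed.

Lemma k_p1 : k + 1 = w * (k - 1).
Proof. by rewrite /k; field; rewrite wm1. Qed.

Lemma k_neq0 : k != 0.
Proof.
rewrite /k mulf_eq0 invr_eq0 negb_or wm1 andbT addr_eq0 //.
Qed.


Lemma crt_eq (a b : nat) : (a == b %[mod 2 * p])%N = (odd a == odd b) && ((a%:R : F) == b%:R).
Proof.
rewrite chinese_remainder ?coprime2n ?p_odd // !modn2 natF_eq.
by case: (odd a); case: (odd b).
Qed.

Lemma crt_lt (e : bool) (g : F) :
  ((if odd (val g) == e then val g else val g + p) < 2 * p)%N.
Proof. have [gp _] := valF g; case: ifP => _; lia. Qed.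

Definition crt (e : bool) (g : F) : 'I_(2 * p) := Ordinal (crt_lt e g).

Lemma crt_odd e g : odd (crt e g) = e.
Proof.
rewrite /=; case: ifP => [/eqP //|/negbT].
by rewrite oddD p_odd addbT; case: e; case: (odd _).
Qed.

Lemma crt_F e g : (((crt e g : nat)%:R) : F) = g.
Proof.
have [_ gF] := valF g.
by rewrite /=; case: ifP => _; rewrite ?natrD ?(pchar_Fp_0 hp) ?addr0; exact: gF.
Qed.

Lemma vert_eq (u v : 'I_(2 * p)) : odd u = odd v -> ((u : nat)%:R : F) = (v : nat)%:R -> u = v.
Proof.
move=> H1 H2; apply/val_inj/eqP.
have : (u == v %[mod 2 * p])%N by rewrite crt_eq H1 H2 !eqxx.
by rewrite !modn_small.
Qed.


Lemma side : w + 1 + -1 * (w - 1) != 0.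
Proof. have -> : w + 1 + -1 * (w - 1) = 2%:R by ring. exact: two_neq0. Qed.

Definition t : F := k * (0 - 2%:R).

Definition cen (l : nat) : 'I_(2 * p) :=
  if l == 0%N then crt false 0 else if l == p then crt false t
  else if ((l%:R : F) ^+ m == 1) then crt (odd l) (k * l%:R)
  else crt (~~ odd l) (k * (l%:R - 2%:R)).

Lemma lab (x : F) : x != 0 -> exists l, [/\ (0 < l)%N, (l < p)%N & (l%:R : F) = x].
Proof.
move=> xnz; have [xp xF] := valF x; exists (val x); split => //.
by rewrite lt0n; apply: contra xnz => /eqP E; rewrite -xF E.
Qed.

Lemma at_dist_crt (v u : 'I_(2 * p)) l : (0 < l <= p)%N ->
  (odd u = odd v (+) odd l /\ ((u : nat)%:R : F) = (v : nat)%:R + l%:R) \/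
  (odd v = odd u (+) odd l /\ ((v : nat)%:R : F) = (u : nat)%:R + l%:R) ->
  at_dist (@cycle_rel (2 * p)) v u l.
Proof.
move=> /andP [l0 lp] H.
apply: at_dist_near; [lia|lia|lia|].
apply: cong_near; [lia|exact: ltn_ord|exact: ltn_ord|lia|].
rewrite !crt_eq !oddD !natrD.
by case: H => [[E1 E2]|[E1 E2]]; apply/orP; [left|right]; rewrite E1 E2 !eqxx.
Qed.

Lemma cover (u : 'I_(2 * p)) : exists2 l, (l <= p)%N & at_dist (@cycle_rel (2 * p)) (cen l) u l.
Proof.
set z : F := (u : nat)%:R.
have zE : ((u : nat)%:R : F) = z by [].
have hk1 := k_m1; have hk0 := k_neq0; have hw0 := w_neq0.
have cen_c0 : forall l, (0 < l < p)%N -> (l%:R : F) ^+ m = 1 -> cen l = crt (odd l) (k * l%:R).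
  move=> l /andP [l0 lp] c; rewrite /cen c eqxx.
  have -> : (l == 0)%N = false by lia.
  by have -> : (l == p)%N = false by lia.
have cen_c1 : forall l, (0 < l < p)%N -> (l%:R : F) ^+ m = -1 -> cen l = crt (~~ odd l) (k * (l%:R - 2%:R)).
  move=> l /andP [l0 lp] c; have n1 : ((-1 : F) == 1) = false by rewrite eq_sym (negbTE one_neq_m1).
  rewrite /cen c n1.
  have -> : (l == 0)%N = false by lia.
  by have -> : (l == p)%N = false by lia.
case: (boolP (odd u)) => ou.
- case: (boolP (z == t)) => [/eqP zt|zt].
    exists p => //; apply: at_dist_crt; first by rewrite p_gt0 leqnn.
    left; rewrite /cen (negbTE (lt0n_neq0 p_gt0)) eqxx crt_odd crt_F zE zt.
    by rewrite ou p_odd (pchar_Fp_0 hp) addr0.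
  have dz : z - t != 0 by rewrite subr_eq0.
  set y := (z - t) / (k - 1).
  have y0 : y != 0 by rewrite mulf_neq0 ?invr_eq0.
  case: (chi_pm y0) => cy.
  + have x0 : y / w != 0 by rewrite mulf_neq0 ?invr_eq0.
    have [l [l0 lp lF]] := lab x0.
    have cl : (l%:R : F) ^+ m = -1.
      by rewrite lF exprMn exprVn hw cy invrN1 mul1r.
    exists l; first lia.
    apply: at_dist_crt; first by rewrite l0 ltnW.
    left; rewrite cen_c1 ?l0 ?lp // crt_odd crt_F ou zE lF.
    split; first by case: (odd l).
    by rewrite /y /t /k; field; rewrite ?hw0 ?wm1 ?side.
  + have [l [l0 lp lF]] := lab y0.
    exists l; first lia.
    apply: at_dist_crt; first by rewrite l0 ltnW.
    right; rewrite cen_c1 ?l0 ?lp ?lF // crt_odd crt_F ou zE.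
    split; first by case: (odd l).
    by rewrite /y /t /k; field; rewrite ?hw0 ?wm1 ?side.
- case: (boolP (z == 0)) => [/eqP z0|z0].
    exists 0%N => //; rewrite /cen eqxx.
    have -> : crt false 0 = u.
      by apply: vert_eq; [rewrite crt_odd (negbTE ou)|rewrite crt_F zE z0].
    by rewrite /at_dist /= in_set1 eqxx.
  set y := z / (k - 1).
  have y0 : y != 0 by rewrite mulf_neq0 ?invr_eq0.
  case: (chi_pm y0) => cy.
  + have [l [l0 lp lF]] := lab y0.
    exists l; first lia.
    apply: at_dist_crt; first by rewrite l0 ltnW.
    right; rewrite cen_c0 ?l0 ?lp ?lF // crt_odd crt_F (negbTE ou) zE.
    split; first by case: (odd l).
    by rewrite /y /k; field; rewrite ?hw0 ?wm1 ?side.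
  + have x0 : y / w != 0 by rewrite mulf_neq0 ?invr_eq0.
    have [l [l0 lp lF]] := lab x0.
    have cl : (l%:R : F) ^+ m = 1.
      by rewrite lF exprMn exprVn hw cy invrN1 mulrNN mul1r.
    exists l; first lia.
    apply: at_dist_crt; first by rewrite l0 ltnW.
    left; rewrite cen_c0 ?l0 ?lp // crt_odd crt_F (negbTE ou) zE lF.
    split; first by case: (odd l).
    by rewrite /y /k; field; rewrite ?hw0 ?wm1 ?side.
Qed.


Lemma crt_inj e1 g1 e2 g2 : crt e1 g1 = crt e2 g2 -> e1 = e2 /\ g1 = g2.
Proof.
move=> E; split; first by rewrite -(crt_odd e1 g1) -(crt_odd e2 g2) E.
by rewrite -(crt_F e1 g1) -(crt_F e2 g2) E.
Qed.

Lemma kx_neq0 l : (0 < l < p)%N -> k * l%:R != 0.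
Proof. by move=> H; rewrite mulf_neq0 ?k_neq0 ?natF_neq0. Qed.

Lemma t_neq0 : t != 0.
Proof.
rewrite /t mulf_neq0 ?k_neq0 // sub0r oppr_eq0; exact: two_neq0.
Qed.

Lemma C0B l : (0 < l < p)%N -> crt false 0 = crt (~~ odd l) (k * (l%:R - 2%:R)) -> False.
Proof.
move=> H /crt_inj [E1 /esym /eqP]; rewrite mulf_eq0 (negbTE k_neq0) /= subr_eq0 => /eqP E.
have l2 : l = 2%N by apply: natF_inj => //; lia.
by move: E1; rewrite l2.
Qed.

Lemma CPA l : (0 < l < p)%N -> crt false t = crt (odd l) (k * l%:R) -> False.
Proof.
move=> H /crt_inj [E1]; rewrite /t => /(mulfI k_neq0) E.
have : l = (p - 2)%N.
  apply: natF_inj; [lia|lia|].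
  rewrite natrB; last lia.
  by rewrite (pchar_Fp_0 hp) E.
move=> E2; move: E1; rewrite E2 oddB ?p_odd //; lia.
Qed.

Lemma CPB l : (0 < l < p)%N -> crt false t = crt (~~ odd l) (k * (l%:R - 2%:R)) -> False.
Proof.
move=> H /crt_inj [_]; rewrite /t => /(mulfI k_neq0) /addIr E.
by move: (natF_neq0 H); rewrite -E eqxx.
Qed.

Lemma CAB l1 l2 : (0 < l1 < p)%N -> (0 < l2 < p)%N -> (l2%:R : F) ^+ m = -1 ->
  crt (odd l1) (k * l1%:R) = crt (~~ odd l2) (k * (l2%:R - 2%:R)) -> False.
Proof.
move=> H1 H2 c2 /crt_inj [E1 /(mulfI k_neq0) E].
have E' : (l2%:R : F) = (l1 + 2)%N%:R by rewrite natrD E subrK.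
move/eqP: E'; rewrite natF_eq (modn_small (_ : l2 < p)%N); last lia.
case: (ltnP (l1 + 2) p) => L.
  rewrite modn_small // => /eqP E3; move: E1; rewrite E3 oddD addbF.
  by case: (odd l1).
have -> : (l1 + 2 = (l1 + 2 - p) + p)%N by lia.
rewrite modnDr modn_small; last lia.
move=> /eqP E3; have l21 : l2 = 1%N by lia.
by move: c2; rewrite l21 expr1n => /eqP; rewrite (negbTE one_neq_m1).
Qed.

Lemma cen_inj l1 l2 : (l1 <= p)%N -> (l2 <= p)%N -> cen l1 = cen l2 -> l1 = l2.
Proof.
have kind : forall l, (l <= p)%N ->
  [\/ l = 0%N /\ cen l = crt false 0, l = p /\ cen l = crt false t,
      [/\ (0 < l < p)%N, (l%:R : F) ^+ m = 1 & cen l = crt (odd l) (k * l%:R)] |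
      [/\ (0 < l < p)%N, (l%:R : F) ^+ m = -1 & cen l = crt (~~ odd l) (k * (l%:R - 2%:R))]].
  move=> l lp; rewrite /cen.
  case: (posnP l) => [->|l0]; first by constructor 1.
  have [->|lp'] := eqVneq l p.
    by constructor 2.
  have H : (0 < l < p)%N by lia.
  rewrite ?(negbTE (lt0n_neq0 l0)) ?(negbTE lp').
  have l0' : (l%:R : F) != 0 by apply: natF_neq0.
  case: (chi_pm l0') => c; rewrite c.
    by rewrite eqxx; apply: Or43; split => //; lia.
  have n1 : ((-1 : F) == 1) = false by rewrite eq_sym (negbTE one_neq_m1).
  by rewrite n1; apply: Or44; split => //; lia.
move=> l1p l2p; case: (kind _ l1p); case: (kind _ l2p).
- by case=> -> _ [-> _].
- by case=> _ -> [_ ->] /crt_inj [_ /esym /eqP]; rewrite (negbTE t_neq0).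
- by case=> H _ -> [_ ->] /crt_inj [_ /esym /eqP]; rewrite (negbTE (kx_neq0 H)).
- by case=> H _ -> [_ ->] /(C0B H).
- by case=> _ -> [_ ->] /crt_inj [_ /eqP]; rewrite (negbTE t_neq0).
- by case=> -> _ [-> _].
- by case=> H _ -> [_ ->] /(CPA H).
- by case=> H _ -> [_ ->] /(CPB H).
- by case=> _ -> [H _ ->] /crt_inj [_ /eqP]; rewrite (negbTE (kx_neq0 H)).
- by case=> _ -> [H _ ->] /esym /(CPA H).
- case=> H2 _ -> [H1 _ ->] /crt_inj [_ /(mulfI k_neq0) E].
  by apply: natF_inj E; lia.
- by case=> H2 c2 -> [H1 _ ->] /(CAB H1 H2 c2).
- by case=> _ -> [H _ ->] /esym /(C0B H).
- by case=> _ -> [H _ ->] /esym /(CPB H).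
- by case=> H2 _ -> [H1 c1 ->] /esym /(CAB H2 H1 c1).
- case=> H2 _ -> [H1 _ ->] /crt_inj [_ /(mulfI k_neq0) /addIr E].
  by apply: natF_inj E; lia.
Qed.


Definition lam (v : 'I_(2 * p)) : nat :=
  if [pick l : 'I_p.+1 | cen l == v] is Some l then val l else 0%N.

Lemma lamE l : (l <= p)%N -> lam (cen l) = l.
Proof.
move=> lp; rewrite /lam; case: pickP => [l' /eqP E|N].
  by apply: cen_inj E => //; rewrite -ltnS.
by have := N (Ordinal (lp : (l < p.+1)%N)); rewrite eqxx.
Qed.

Lemma exists_dom : exists S lam, ext_irr_dom (@cycle_rel (2 * p)) S lam.
Proof.
have L : forall l : 'I_p.+1, (val l <= p)%N by move=> l; rewrite -ltnS ltn_ord.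
exists [set cen (val l) | l : 'I_p.+1], lam; split; last split.
- move=> v1 v2 /imsetP [l1 _ ->] /imsetP [l2 _ ->].
  by rewrite (lamE (L l1)) (lamE (L l2)) => ->.
- exists (cen 0); first by apply/imsetP; exists ord0.
  by rewrite lamE.
- move=> u; have [l lp H] := cover u.
  exists (cen l); first by apply/imsetP; exists (Ordinal (lp : (l < p.+1)%N)).
  by rewrite lamE.
Qed.

End Constr.

From Stdlib Require Import Classical.

Lemma min_exists (T : finType) (e : rel T) :
  (exists S lam, ext_irr_dom e S lam) -> exists S lam, optimal_ext_irr_dom e S lam.
Proof.
have : forall n (S : {set T}) lam, ext_irr_dom e S lam -> (#|S| <= n)%N ->
    exists S lam, optimal_ext_irr_dom e S lam.
  elim=> [|n IH] S lam H Sn;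
    case: (classic (exists S' lam', ext_irr_dom e S' lam' /\ (#|S'| < #|S|)%N)) =>
      [[S' [lam' [H' lt]]]|N].
  - lia.
  - exists S, lam; split => // S' lam' H'; rewrite leqNgt; apply/negP => lt.
    by apply: N; exists S', lam'.
  - by apply: (IH S' lam' H'); lia.
  - exists S, lam; split => // S' lam' H'; rewrite leqNgt; apply/negP => lt.
    by apply: N; exists S', lam'.
move=> M [S [lam H]]; exact: (M _ S lam H (leqnn _)).
Qed.

Theorem corollary4p9 (p : nat) (hp : prime p) (h7 : 7 <= p) :
  exists (S : {set 'I_(2 * p)}) (lam : 'I_(2 * p) -> nat),
    optimal_ext_irr_dom (@cycle_rel (2 * p)) S lam.
Proof.
have [w [hw hw1]] := exists_w hp h7.
exact: min_exists (exists_dom hp h7 hw hw1).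
Qed.
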